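(* Let $\mathcal{B}=\langle V,F,E\rangle$ be a finite bipartite graph and let $W\subseteq V$ be such that the subgraph of $\mathcal{B}$ induced by $(V\setminus W)\cup F$ is self-contained. Then Algorithm 1 (causal ordering via minimal self-contained sets) applied to $(W,\mathcal{B})$ is well-defined, i.e. every run of it can be carried out to completion (at every iteration of the loop the current graph possesses a minimal self-contained set), and its output directed cluster graph is unique, i.e. it does not depend on which minimal self-contained sets are chosen during the run.
   Context: A bipartite graph $\mathcal{B}=\langle V,F,E\rangle$ has disjoint vertex sets $V$ (variable vertices) and $F$ (constraint vertices) and undirected edges $(v-f)$ with $v\in V$, $f\in F$. For $X\subseteq V\cup F$, $\mathrm{adj}_{\mathcal{B}}(X)$ is the set of vertices adjacent in $\mathcal{B}$ to some vertex of $X$. A set $F'\subseteq F$ is self-contained (in $\mathcal{B}$) if $|F'|=|\mathrm{adj}_{\mathcal{B}}(F')|$ and $|F''|\le|\mathrm{adj}_{\mathcal{B}}(F'')|$ for all $F''\subseteq F'$. The graph $\mathcal{B}$ is self-contained if $|F|=|V|$ and $F$ is self-contained. A non-empty self-contained set is minimal self-contained if none of its non-empty strict subsets is self-contained. A directed cluster graph is a pair $\langle\mathcal{V},\mathcal{E}\rangle$ where $\mathcal{V}$ is a partition of a vertex set and $\mathcal{E}$ is a set of directed edges $x\to C$ from vertices $x$ to clusters $C\in\mathcal{V}$. Algorithm 1. Input: $W$ and $\mathcal{B}$ as in the claim. Initialize $\mathcal{E}=\emptyset$, $\mathcal{V}=\{\{w\}:w\in W\}$, and $\mathcal{B}'=\langle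 V',F',E'\rangle$ the subgraph of $\mathcal{B}$ induced by $(V\setminus W)\cup F$. While $\mathcal{B}'$ is not the null graph: choose a minimal self-contained set $S_F\subseteq F'$ of $\mathcal{B}'$; let $C=S_F\cup\mathrm{adj}_{\mathcal{B}'}(S_F)$; add $C$ to $\mathcal{V}$; for every $v\in\mathrm{adj}_{\mathcal{B}}(S_F)\setminus\mathrm{adj}_{\mathcal{B}'}(S_F)$ add the edge $v\to C$ to $\mathcal{E}$; replace $\mathcal{B}'$ by its subgraph induced by $(V'\cup F')\setminus C$. Output: the directed cluster graph $\langle\mathcal{V},\mathcal{E}\rangle$ (the causal ordering graph). *)

(* Defs.v *)
From mathcomp Require Import all_boot.
Set Implicit Arguments. Unset Strict Implicit. Unset Printing Implicit Defensive.

(* A finite bipartite graph B = <V, F, E>: variable vertices V, constraint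
   vertices F, and an edge relation E v f meaning (v - f) is an edge.
   A subgraph induced by Vs \cup Fs (Vs : {set V}, Fs : {set F}) is
   represented by the pair (Vs, Fs). *)

Section Defs.
Variables (V F : finType) (E : V -> F -> bool).

Definition adjF (Vs : {set V}) (S : {set F}) : {set V} :=
  [set v in Vs | [exists f in S, E v f]].

Definition self_contained (Vs : {set V}) (Fs : {set F}) (S : {set F}) : bool :=
  [&& S \subset Fs, #|S| == #|adjF Vs S| &
      [forall S2 : {set F}, (S2 \subset S) ==> (#|S2| <= #|adjF Vs S2|)]].

Definition graph_self_contained (Vs : {set V}) (Fs : {set F}) : bool :=
  (#|Fs| == #|Vs|) && self_contained Vs Fs Fs.

Definition minimal_self_contained (Vs : {set V}) (Fs : {set F}) (S : {set F}) : bool :=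
  [&& S != set0, self_contained Vs Fs S &
      [forall S2 : {set F}, ((S2 != set0) && (S2 \proper S)) ==> ~~ self_contained Vs Fs S2]].

(* Directed cluster graphs on the vertex set V + F: a set of clusters and a
   set of edges x -> C. *)
Definition cluster := {set (V + F)}.

(* State of a run of Algorithm 1: the current graph B' (given by its vertex
   sets), and the partial output (clusters, edges). *)
Record state := State {
  st_V : {set V};
  st_F : {set F};
  st_clusters : {set cluster};
  st_edges : {set ((V + F) * cluster)} }.

Definition initial_state (W : {set V}) : state :=
  State (~: W) setT [set [set inl w] | w in W] set0.

Definition new_cluster (st : state) (S : {set F}) : cluster :=
  (inr @: S) :|: (inl @: adjF (st_V st) S).

Definition step (st st' : state) : Prop :=
  exists S : {set F},
    minimal_self_contained (st_V st) (st_F st) S /\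
    let C := new_cluster st S in
    st' = State (st_V st :\: adjF (st_V st) S) (st_F st :\: S)
                (C |: st_clusters st)
                (st_edges st :|:
                   [set (inl v, C) | v in adjF setT S :\: adjF (st_V st) S]).

Inductive reachable (W : {set V}) : state -> Prop :=
| reach_init : reachable W (initial_state W)
| reach_step st st' : reachable W st -> step st st' -> reachable W st'.

(* The current graph is the null graph: the loop terminates. *)
Definition null_state (st : state) : Prop := st_V st = set0 /\ st_F st = set0.

End Defs.

(* Main.v *)
Require Import Defs.
From mathcomp Require Import all_boot.
From mathcomp Require Import zify.

Section Helpers.
Variables (V F : finType) (E : V -> F -> bool).

Local Notation adj := (adjF E).
Local Notation sc := (self_contained E).
Local Notation msc := (minimal_self_contained E).

Lemma adjF_sub (Vs : {set V}) (S : {set F}) : adj Vs S \subset Vs.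
Proof. by apply/subsetP => v; rewrite inE => /andP[]. Qed.

Lemma adjFD (Vs X : {set V}) (S : {set F}) : adj (Vs :\: X) S = adj Vs S :\: X.
Proof. by apply/setP => v; rewrite !inE andbA. Qed.

Lemma adjFS (Vs : {set V}) (S T : {set F}) : S \subset T -> adj Vs S \subset adj Vs T.
Proof.
move=> ST; apply/subsetP => v; rewrite !inE => /andP[-> /existsP[f /andP[fS Ef]]].
by apply/existsP; exists f; rewrite (subsetP ST _ fS).
Qed.

Lemma adjFU (Vs : {set V}) (S T : {set F}) : adj Vs (S :|: T) = adj Vs S :|: adj Vs T.
Proof.
apply/setP => v; rewrite !inE; case: (v \in Vs) => //=.
apply/existsP/orP.
  by case=> f /andP[]; rewrite inE => /orP[] fS Ef; [left|right];
     apply/existsP; exists f; rewrite fS.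
by case=> /existsP[f /andP[fS Ef]]; exists f; rewrite inE fS ?orbT.
Qed.

Lemma adjF0 (Vs : {set V}) : adj Vs set0 = set0.
Proof.
apply/setP => v; rewrite !inE; apply/andP => -[_ /existsP[f]]; by rewrite inE.
Qed.

Definition inv (st : state V F) :=
  #|st_F st| = #|st_V st| /\
  forall T : {set F}, T \subset st_F st -> #|T| <= #|adj (st_V st) T|.

Definition next (st : state V F) (S : {set F}) : state V F :=
  let C := new_cluster E st S in
    State (st_V st :\: adj (st_V st) S) (st_F st :\: S)
                (C |: st_clusters st)
                (st_edges st :|:
                   [set (inl v, C) | v in adj setT S :\: adj (st_V st) S]).

Lemma stepE st st' : step E st st' <-> exists S, msc (st_V st) (st_F st) S /\ st' = next st S.
Proof. by []. Qed.

Lemma inv_sc st : inv st -> sc (st_V st) (st_F st) (st_F st).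
Proof.
case=> hc hH; rewrite /self_contained subxx /=.
apply/andP; split.
  rewrite eqn_leq hH // hc; exact: subset_leq_card (adjF_sub _ _).
by apply/forallP => T; apply/implyP; apply: hH.
Qed.

Lemma inv_next st (S : {set F}) : inv st -> sc (st_V st) (st_F st) S -> inv (next st S).
Proof.
case=> hc hH /and3P[SF /eqP hS _]; rewrite /inv /=.
have AV := adjF_sub (st_V st) S.
split.
  rewrite cardsDS // cardsDS //; lia.
move=> T; rewrite subsetD => /andP[TF dTS].
have hU : T :|: S \subset st_F st by rewrite subUset TF.
have := hH _ hU; rewrite adjFU adjFD.
have := cardsUI T S; have -> : T :&: S = set0.
  by apply/eqP; rewrite setI_eq0.
rewrite cards0.
have := cardsUI (adj (st_V st) T) (adj (st_V st) S).
have := cardsD (adj (st_V st) T) (adj (st_V st) S).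
have := subset_leq_card (subsetIl (adj (st_V st) T) (adj (st_V st) S)).
lia.
Qed.

Lemma exists_msc (Vs : {set V}) (Fs : {set F}) n (S : {set F}) : #|S| <= n -> S != set0 -> sc Vs Fs S ->
  exists S', msc Vs Fs S'.
Proof.
elim: n S => [|n IH] S hS hne hsc.
  by move: hne; rewrite -card_gt0; lia.
case h: [forall S2 : {set F}, ((S2 != set0) && (S2 \proper S)) ==> ~~ sc Vs Fs S2].
  by exists S; rewrite /minimal_self_contained hne hsc h.
move/negbT: h; rewrite negb_forall => /existsP[S2].
rewrite negb_imply negbK => /andP[/andP[ne2 pr2] sc2].
apply: (IH S2) => //; have := proper_card pr2; lia.
Qed.

Lemma key_disjoint st (S1 S2 : {set F}) : inv st ->
  msc (st_V st) (st_F st) S1 -> msc (st_V st) (st_F st) S2 -> S1 != S2 ->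
  S1 :&: S2 = set0 /\ adj (st_V st) S1 :&: adj (st_V st) S2 = set0.
Proof.
case=> hc hH.
move=> /and3P[ne1 /and3P[S1F /eqP c1 _] /forallP m1].
move=> /and3P[ne2 /and3P[S2F /eqP c2 _] /forallP m2] neq.
have hU : S1 :|: S2 \subset st_F st by rewrite subUset S1F.
have hI : S1 :&: S2 \subset st_F st by rewrite subIset ?S1F.
have h1 := hH _ hU; have h2 := hH _ hI.
rewrite adjFU in h1.
have h3s : adj (st_V st) (S1 :&: S2) \subset adj (st_V st) S1 :&: adj (st_V st) S2.
  by rewrite subsetI !adjFS ?subsetIl ?subsetIr.
have h3 := subset_leq_card h3s.
have h4 := cardsUI S1 S2.
have h5 := cardsUI (adj (st_V st) S1) (adj (st_V st) S2).
have eI : #|S1 :&: S2| = #|adj (st_V st) (S1 :&: S2)| by lia.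
have eA : #|adj (st_V st) S1 :&: adj (st_V st) S2| = #|adj (st_V st) (S1 :&: S2)| by lia.
have I0 : S1 :&: S2 = set0.
  apply/eqP; apply/negPn/negP => neI.
  have scI : sc (st_V st) (st_F st) (S1 :&: S2).
    rewrite /self_contained hI eI eqxx /=.
    apply/forallP => T; apply/implyP => TI; apply: hH.
    exact: subset_trans TI hI.
  have e1 : S1 :&: S2 = S1.
    apply/eqP; apply/negPn/negP => ne.
    have := m1 (S1 :&: S2); rewrite neI properEneq ne subsetIl /= scI //.
  have e2 : S1 :&: S2 = S2.
    apply/eqP; apply/negPn/negP => ne.
    have := m2 (S1 :&: S2); rewrite neI properEneq ne subsetIr /= scI //.
  by move: neq; rewrite -{1}e1 e2 eqxx.
split => //.
rewrite I0 adjF0 cards0 in eA.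
by apply/eqP; rewrite -cards_eq0 eA.
Qed.

Lemma comm st (S1 S2 : {set F}) : inv st ->
  msc (st_V st) (st_F st) S1 -> msc (st_V st) (st_F st) S2 -> S1 != S2 ->
  msc (st_V (next st S1)) (st_F (next st S1)) S2 /\
  next (next st S1) S2 = next (next st S2) S1.
Proof.
move=> hinv m1 m2 neq.
have [I0 A0] := key_disjoint st S1 S2 hinv m1 m2 neq.
have [I0' A0'] : S2 :&: S1 = set0 /\ adj (st_V st) S2 :&: adj (st_V st) S1 = set0.
  by rewrite setIC I0 setIC A0.
have key : forall Sa Sb : {set F}, adj (st_V st) Sa :&: adj (st_V st) Sb = set0 ->
    forall T : {set F}, T \subset Sb -> adj (st_V st :\: adj (st_V st) Sa) T = adj (st_V st) T.
  move=> Sa Sb hA T TS; rewrite adjFD; apply/setP => v; rewrite inE.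
  apply: andb_idl => vT; apply/negP => vA.
  have : v \in adj (st_V st) Sa :&: adj (st_V st) Sb.
    by rewrite inE vA (subsetP (@adjFS _ _ _ TS) _ vT).
  by rewrite hA inE.
have scE : forall Sa Sb : {set F}, msc (st_V st) (st_F st) Sb -> Sa :&: Sb = set0 ->
    adj (st_V st) Sa :&: adj (st_V st) Sb = set0 ->
    forall T : {set F}, T \subset Sb ->
    sc (st_V st :\: adj (st_V st) Sa) (st_F st :\: Sa) T = sc (st_V st) (st_F st) T.
  move=> Sa Sb /and3P[_ /and3P[SbF _ _] _] hI hA T TS.
  rewrite /self_contained (key Sa Sb) //.
  have -> : T \subset st_F st :\: Sa.
    rewrite subsetD (subset_trans TS SbF) /=.
    rewrite -setI_eq0; apply/eqP; apply/setP => x; rewrite !inE.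
    apply/andP => -[xT xSa]; have : x \in Sa :&: Sb by rewrite inE xSa (subsetP TS).
    by rewrite hI inE.
  rewrite (subset_trans TS SbF); congr (_ && _); congr (_ && _).
  apply: eq_forallb => T'; case TT: (T' \subset T) => //=.
  by rewrite (key Sa Sb) // (subset_trans TT TS).
have mscE : forall Sa Sb : {set F}, msc (st_V st) (st_F st) Sb -> Sa :&: Sb = set0 ->
    adj (st_V st) Sa :&: adj (st_V st) Sb = set0 ->
    msc (st_V (next st Sa)) (st_F (next st Sa)) Sb.
  move=> Sa Sb mb hI hA; move: (mb); rewrite /minimal_self_contained /=.
  rewrite (scE Sa Sb) // => /and3P[-> -> /forallP h] /=.
  apply/forallP => T; have := h T.
  case TS: (T \proper Sb); rewrite ?andbF //= (scE Sa Sb) //; exact: proper_sub TS.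
split; first exact: mscE.
rewrite /next /new_cluster /= (key _ _ A0) // (key _ _ A0') //.
by rewrite !setDDl setUC [S2 :|: _]setUC setUCA setUAC.
Qed.

Inductive rstar : state V F -> state V F -> Prop :=
| rs_refl st : rstar st st
| rs_cons st st1 st2 : step E st st1 -> rstar st1 st2 -> rstar st st2.

Lemma rstar_snoc x y z : rstar x y -> step E y z -> rstar x z.
Proof.
elim=> [st|st st1 st2 h _ IH] hs; first by apply: rs_cons hs (rs_refl _).
exact: rs_cons h (IH hs).
Qed.

Lemma reach_rstar W st : reachable E W st -> rstar (@initial_state V F W) st.
Proof.
elim=> [|s s' _ IH hs]; first exact: rs_refl.
exact: rstar_snoc IH hs.
Qed.

Lemma rstar_reach W x y : reachable E W x -> rstar x y -> reachable E W y.
Proof.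
move=> hx h; elim: h hx => // st st1 st2 hs _ IH hx.
by apply: IH; apply: reach_step hx hs.
Qed.

Lemma rstar_inv x y : inv x -> rstar x y -> inv y.
Proof.
move=> hx h; elim: h hx => // st st1 st2 /stepE[S [/and3P[_ hS _] ->]] _ IH hx.
by apply: IH; apply: inv_next.
Qed.

Lemma inv_notnull st : inv st -> ~ null_state st -> st_F st != set0.
Proof.
case=> hc _ hn; apply/negP => /eqP h; apply: hn; split => //.
by apply/eqP; rewrite -cards_eq0 -hc h cards0.
Qed.

Lemma null_nostep st st' : null_state st -> ~ step E st st'.
Proof.
case=> _ hF /stepE[S [/and3P[ne /and3P[SF _ _] _] _]].
by move: SF; rewrite hF subset0 (negbTE ne).
Qed.

Lemma inv_msc st : inv st -> ~ null_state st -> exists S, msc (st_V st) (st_F st) S.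
Proof.
move=> hi hn; apply: (@exists_msc _ _ #|st_F st| (st_F st)) => //.
  exact: inv_notnull.
exact: inv_sc.
Qed.

Lemma card_next st (S : {set F}) : msc (st_V st) (st_F st) S -> #|st_F (next st S)| < #|st_F st|.
Proof.
move=> /and3P[ne /and3P[SF _ _] _] /=.
rewrite cardsDS //; move: ne; rewrite -card_gt0 => ne.
have := subset_leq_card SF; lia.
Qed.

Lemma null_of st : inv st -> st_F st = set0 -> null_state st.
Proof.
case=> hc _ h; split => //.
by apply/eqP; rewrite -cards_eq0 -hc h cards0.
Qed.

Lemma terminate n st : #|st_F st| <= n -> inv st -> exists y, rstar st y /\ null_state y.
Proof.
elim: n st => [|n IH] st hn hi.
  exists st; split; first exact: rs_refl.
  by apply: null_of => //; apply/eqP; rewrite -cards_eq0; lia.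
case: (eqVneq (st_F st) set0) => hF.
  by exists st; split; [exact: rs_refl | exact: null_of].
have [S hS] := @exists_msc _ _ #|st_F st| (st_F st) (leqnn _) hF (inv_sc st hi).
have hi' : inv (next st S) by apply: inv_next => //; case/and3P: hS.
have := card_next st S hS => hlt.
have [y [hy ny]] := IH (next st S) ltac:(lia) hi'.
exists y; split => //; apply: rs_cons hy; apply/stepE; exists S; split => //.
Qed.

Lemma eq_sym_neq (A B : {set F}) : A != B -> B != A.
Proof. by rewrite eq_sym. Qed.

Lemma rstar_case x y : rstar x y -> x = y \/ exists z, step E x z /\ rstar z y.
Proof. by case=> [st|st st1 st2 h1 h2]; [left|right; exists st1]. Qed.

Lemma unique n st : #|st_F st| <= n -> inv st ->
  forall a b, rstar st a -> rstar st b -> null_state a -> null_state b -> a = b.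
Proof.
elim: n st => [|n IH] st hn hi a b ha hb na nb.
  have hnull : null_state st by apply: null_of => //; apply/eqP; rewrite -cards_eq0; lia.
  case: (rstar_case _ _ ha) => [<-|[z [hs _]]]; last by case: (null_nostep _ _ hnull hs).
  case: (rstar_case _ _ hb) => [<-//|[z [hs _]]]; by case: (null_nostep _ _ hnull hs).
case: (rstar_case _ _ ha) => [ea|[x [hsx hxa]]].
  subst a; case: (rstar_case _ _ hb) => [//|[z [hs _]]]; by case: (null_nostep _ _ na hs).
case: (rstar_case _ _ hb) => [eb|[y [hsy hyb]]].
  subst b; by case: (null_nostep _ _ nb hsx).
move: hsx hsy => /stepE[S1 [m1 ex]] /stepE[S2 [m2 ey]]; subst x y.
have lt1 := card_next st S1 m1; have lt2 := card_next st S2 m2.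
have i1 : inv (next st S1) by apply: inv_next => //; case/and3P: m1.
have i2 : inv (next st S2) by apply: inv_next => //; case/and3P: m2.
case: (eqVneq S1 S2) => [e|neq].
  subst S2; exact: (IH (next st S1) ltac:(lia) i1 _ _ hxa hyb na nb).
have [m12 e12] := comm st S1 S2 hi m1 m2 neq.
have lt12 := card_next _ _ m12.
have i12 : inv (next (next st S1) S2) by apply: inv_next => //; case/and3P: m12.
have [c [hc nc]] := terminate #|st_F (next (next st S1) S2)| _ (leqnn _) i12.
have s1 : rstar (next st S1) c.
  by apply: rs_cons hc; apply/stepE; exists S2.
have [m21 _] := comm st S2 S1 hi m2 m1 (eq_sym_neq S1 S2 neq) .
have s2 : rstar (next st S2) c.
  by apply: rs_cons hc; apply/stepE; exists S1; rewrite -e12.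
have -> := IH (next st S1) ltac:(lia) i1 _ _ hxa s1 na nc.
by have -> := IH (next st S2) ltac:(lia) i2 _ _ hyb s2 nb nc.
Qed.

End Helpers.

Theorem theorem4 (V F : finType) (E : V -> F -> bool) (W : {set V})
  (Hsc : graph_self_contained E (~: W) [set: F]) :
  (* well-defined: at every iteration the current graph has a minimal
     self-contained set *)
  (forall st : state V F, reachable E W st -> ~ null_state st ->
     exists S : {set F}, minimal_self_contained E (st_V st) (st_F st) S) /\
  (* some run reaches completion *)
  (exists st : state V F, reachable E W st /\ null_state st) /\
  (* uniqueness of the output *)
  (forall st1 st2 : state V F, reachable E W st1 -> reachable E W st2 ->
     null_state st1 -> null_state st2 ->
     st_clusters st1 = st_clusters st2 /\ st_edges st1 = st_edges st2).
Proof.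
have hi0 : @inv V F E (@initial_state V F W).
  move: Hsc => /andP[/eqP hc /and3P[_ _ /forallP hH]]; split => //.
  by move=> T TF; have := hH T; rewrite TF.
have hreach : forall st, reachable E W st -> @inv V F E st.
  by move=> st r; apply: (@rstar_inv V F E _ _ hi0 (@reach_rstar V F E W _ r)).
split; first by move=> st /hreach hi hn; apply: (@inv_msc V F E).
split.
  have [y [hy ny]] := @terminate V F E #|st_F (@initial_state V F W)| _ (leqnn _) hi0.
  by exists y; split => //; apply: (@rstar_reach V F E W _ _ _ hy); apply: reach_init.
move=> st1 st2 r1 r2 n1 n2.
by have -> := @unique V F E #|st_F (@initial_state V F W)| _ (leqnn _) hi0 _ _
  (@reach_rstar V F E W _ r1) (@reach_rstar V F E W _ r2) n1 n2.
Qed.
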